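(* Let $m\ge 1$ and $n\ge m$. Let $\mathcal{A}$ be any deterministic adaptive procedure that makes at most $2^m-2$ oracle queries, each query being a string $\mathbf{y}\in\{0,1\}^m$ answered by whether $\mathbf{y}\in C(f)$. Then there exist fully balanced functions $f,g:\{0,1\}^n\to\{0,1\}^m$ with $\dim\operatorname{img}(f)=m$ and $\dim\operatorname{img}(g)=m-1$ such that $\mathcal{A}$ makes the same queries and receives the same answers on $f$ as on $g$. In particular, no such procedure distinguishes the cases $r=m-1$ and $r=m$ with certainty using fewer than $2^m-1$ queries.
   Context: Strings in $\{0,1\}^k$ are identified with vectors of $\mathbb{F}_2^k$; $\mathbf{a}\cdot\mathbf{b}=\bigoplus_i a_ib_i$ (mod 2). $f$ is $\mathbf{y}$-balanced if $f(\mathbf{x})\cdot\mathbf{y}=0$ for exactly half of the $\mathbf{x}$ and $=1$ for the other half, and $\mathbf{y}$-constant if $f(\mathbf{x})\cdot\mathbf{y}$ is the same for all $\mathbf{x}$. $f$ is fully balanced if for every $\mathbf{y}$ it is $\mathbf{y}$-balanced or $\mathbf{y}$-constant; then $\operatorname{img}(f)$ is an affine subspace, and $r$ denotes its dimension. $C(f)=\{\mathbf{y}: f\text{ is }\mathbf{y}\text{-constant}\}$. A query corresponds to one run of the Generalised Phase Kick-Back algorithm with marker $\mathbf{y}$, whose output is $\mathbf{0}$ exactly when $f$ is $\mathbf{y}$-constant (for fully balanced $f$); a marker selection algorithm only uses whether this output is $\mathbf{0}$. *)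

(* Defs.v *)
From HB Require Import structures.
From mathcomp Require Import all_boot all_order all_algebra.
Set Implicit Arguments. Unset Strict Implicit. Unset Printing Implicit Defensive.
Import GRing.Theory.
Local Open Scope ring_scope.

Notation bv k := 'rV['F_2]_k.

Definition dotv (k : nat) (a b : bv k) : 'F_2 := (a *m b^T) 0 0.

Section Defs.
Variables (n m : nat).
Implicit Type f : bv n -> bv m.

Definition ybalanced f (y : bv m) : Prop :=
  #|[set x : bv n | dotv (f x) y == 0]| = #|[set x : bv n | dotv (f x) y == 1]|.

Definition yconstant f (y : bv m) : bool :=
  [exists c : 'F_2, [forall x : bv n, dotv (f x) y == c]].

Definition fully_balanced f : Prop :=
  forall y : bv m, ybalanced f y \/ yconstant f y.

Definition Cset f : {set bv m} := [set y | yconstant f y].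

(* dimension of the affine hull of img(f) (= dim img(f) when img(f) is an
   affine subspace): rank of the span of the differences f x - f 0. *)
Definition dim_img f : nat :=
  \rank (\matrix_(i < #|{: bv n}|) (f (enum_val i) - f 0)).
End Defs.

(* A deterministic adaptive procedure: the next query is a function of the
   history of (query, answer) pairs so far.  [transcript q O k] is the list
   of the first k (query, answer) pairs when interacting with oracle O. *)
Fixpoint transcript (m : nat) (q : seq (bv m * bool) -> bv m)
  (O : bv m -> bool) (k : nat) : seq (bv m * bool) :=
  match k with
  | 0 => [::]
  | k'.+1 => let h := transcript q O k' in
             let y := q h in rcons h (y, O y)
  end.

(* Main.v *)
Require Import Defs.
From mathcomp Require Import all_boot all_order all_algebra zify.
Set Implicit Arguments. Unset Strict Implicit. Unset Printing Implicit Defensive.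
Import GRing.Theory.
Local Open Scope ring_scope.

Lemma F2cases (a : 'F_2) : (a == 0) || (a == 1).
Proof. case: a => [[|[|i]] Hi]; [by apply/orP; left; apply/eqP; apply: val_inj|by apply/orP; right; apply/eqP; apply: val_inj|].
 exfalso. move: Hi. rewrite /=. done. Qed.

Lemma F2_neq0 (a : 'F_2) : a != 0 -> a = 1.
Proof. by case/orP: (F2cases a) => /eqP -> //; rewrite eqxx. Qed.

Definition lin (n m : nat) (A : 'M['F_2]_(n, m)) : bv n -> bv m := fun x => x *m A.

Lemma dot_lin n m (A : 'M['F_2]_(n, m)) x y :
  dotv (lin A x) y = (x *m (A *m y^T)) 0 0.
Proof. by rewrite /dotv /lin mulmxA. Qed.

Lemma dot_e n (v : 'cV['F_2]_n) (j : 'I_n) : ((delta_mx 0 j : 'rV_n) *m v) 0 0 = v j 0.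
Proof. by rewrite -rowE mxE. Qed.

Lemma nz_col n (v : 'cV['F_2]_n) : v != 0 -> exists j, v j 0 = 1.
Proof.
move=> nz; case: (pickP (fun j => v j 0 != 0)) => [j Hj|H].
  by exists j; apply: F2_neq0.
exfalso; move/eqP: nz; apply; apply/matrixP => i k; rewrite (ord1 k) mxE.
by move/negbFE/eqP: (H i).
Qed.

Lemma F2aa (a : 'F_2) : a + a = 0.
Proof. by case/orP: (F2cases a) => /eqP ->; apply/eqP. Qed.

Lemma bvaa n m (e : 'M['F_2]_(n, m)) : e + e = 0.
Proof. by apply/matrixP=> i j; rewrite !mxE F2aa. Qed.

Lemma fb_lin n m (A : 'M['F_2]_(n, m)) : fully_balanced (lin A).
Proof.
move=> y; set v := A *m y^T.
have [v0|nz] := eqVneq v 0.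
  right; apply/existsP; exists 0; apply/forallP => x.
  by rewrite dot_lin -/v v0 mulmx0 mxE.
left; have [j vj] := nz_col nz.
pose e : bv n := delta_mx 0 j.
pose phi := fun x : bv n => x + e.
have phiK : involutive phi by move=> x; rewrite /phi -addrA bvaa addr0.
have phiE x : (phi x *m v) 0 0 = (x *m v) 0 0 + 1.
  rewrite /phi mulmxDl mxE -vj -(dot_e v j). done.
rewrite /ybalanced.
have inj := can_inj phiK.
apply/eqP; rewrite eqn_leq; apply/andP; split.
  rewrite -(card_imset _ inj); apply: subset_leq_card; apply/subsetP => z.
  case/imsetP => x; rewrite !inE !dot_lin -/v => /eqP Hx ->.
  by rewrite phiE Hx add0r.
rewrite -(card_imset _ inj); apply: subset_leq_card; apply/subsetP => z.
case/imsetP => x; rewrite !inE !dot_lin -/v => /eqP Hx ->.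
by rewrite phiE Hx F2aa.
Qed.

Lemma Cset_lin n m (A : 'M['F_2]_(n, m)) y :
  (y \in Cset (lin A)) = (A *m y^T == 0).
Proof.
rewrite inE; set v := A *m y^T.
have [v0|nz] := eqVneq v 0.
  apply/existsP; exists 0; apply/forallP => x.
  by rewrite dot_lin -/v v0 mulmx0 mxE.
apply/negbTE/negP => /existsP [c /forallP H].
have [j vj] := nz_col nz.
have := H 0; have := H (delta_mx 0 j).
rewrite !dot_lin -/v dot_e vj mul0mx mxE => /eqP <- /eqP.
by apply/eqP.
Qed.

Lemma dim_lin n m (A : 'M['F_2]_(n, m)) : dim_img (lin A) = \rank A.
Proof.
rewrite /dim_img.
set E := \matrix_(i < #|{: bv n}|) (enum_val i : bv n).
have -> : (\matrix_(i < #|{: bv n}|) (lin A (enum_val i) - lin A 0)) = E *m A.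
  apply/row_matrixP => i; rewrite row_mul !rowK /lin mul0mx subr0 /E.
  done.
apply/eqP; rewrite eqn_leq mxrankM_maxr /=.
have sE : (1%:M <= E)%MS.
  apply/row_subP => i; rewrite row1.
  by have := row_sub (enum_rank (delta_mx 0 i : bv n)) E; rewrite /E rowK enum_rankK.
by have := mxrankS (submxMr A sE); rewrite mul1mx.
Qed.

Lemma LB n m : (m <= n)%N ->
  (pid_mx m : 'M['F_2]_(m, n)) *m (pid_mx m : 'M_(n, m)) = 1%:M.
Proof. by move=> h; rewrite mul_pid_mx !minnn (minn_idPr h) pid_mx_1. Qed.

Lemma B_inj n m p (w : 'M['F_2]_(m, p)) : (m <= n)%N ->
  ((pid_mx m : 'M_(n, m)) *m w == 0) = (w == 0).
Proof.
move=> h; apply/eqP/eqP => [H|->]; last by rewrite mulmx0.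
by rewrite -(mul1mx w) -(LB h) -mulmxA H mulmx0.
Qed.

Lemma rank_BM n m p (w : 'M['F_2]_(m, p)) : (m <= n)%N ->
  \rank ((pid_mx m : 'M_(n, m)) *m w) = \rank w.
Proof.
move=> h; apply/eqP; rewrite eqn_leq mxrankM_maxr /=.
by have := mxrankM_maxr (pid_mx m : 'M_(m, n)) ((pid_mx m : 'M_(n, m)) *m w);
  rewrite mulmxA LB // mul1mx.
Qed.

Definition Pm m (y0 : bv m) (j : 'I_m) : 'M['F_2]_m :=
  1%:M - y0^T *m delta_mx 0 j.

Lemma Pm_ker m (y0 : bv m) j y : y0 0 j = 1 ->
  (Pm y0 j *m y^T == 0) = (y == 0) || (y == y0).
Proof.
move=> hj; rewrite /Pm mulmxBl mul1mx -mulmxA.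
rewrite [delta_mx 0 j *m y^T]mx11_scalar dot_e mxE mul_mx_scalar subr_eq0.
case/orP: (F2cases (y 0 j)) => /eqP yj; rewrite yj.
- rewrite scale0r; apply/idP/idP => [/eqP H|].
    by rewrite -(trmxK y) H trmx0 eqxx.
  case/orP => /eqP E; first by rewrite E trmx0.
  by move: yj; rewrite E hj => /eqP; rewrite oner_eq0.
- rewrite scale1r; apply/idP/idP => [/eqP H|].
    by rewrite -(trmxK y) H trmxK eqxx orbT.
  case/orP => /eqP E; last by rewrite E.
  by move: yj; rewrite E mxE => /eqP; rewrite eq_sym oner_eq0.
Qed.

Lemma rank_Pm m (y0 : bv m) j : y0 0 j = 1 -> \rank (Pm y0 j) = m.-1.
Proof.
move=> hj.
have y0nz : y0 != 0 by apply/eqP => E; move: hj; rewrite E mxE => /eqP; rewrite eq_sym oner_eq0.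
have ker u : (u *m (Pm y0 j)^T == 0) = (u == 0) || (u == y0).
  rewrite -(Pm_ker u hj); apply/eqP/eqP => H.
    by rewrite -[Pm y0 j]trmxK -trmx_mul H trmx0.
  by rewrite -[u]trmxK -trmx_mul H trmx0.
have K : (kermx (Pm y0 j)^T :=: y0)%MS.
  apply/eqmxP; rewrite andbC sub_kermx ker eqxx orbT /=.
  apply/row_subP => i.
  have : row i (kermx (Pm y0 j)^T) *m (Pm y0 j)^T == 0.
    by rewrite -row_mul mulmx_ker row0.
  rewrite ker => /orP [] /eqP ->; [exact: sub0mx | exact: submx_refl].
have := mxrank_ker (Pm y0 j)^T; rewrite K rank_rV y0nz mxrank_tr.
have := rank_leq_row (Pm y0 j).
move: (Pm y0 j) => M; rewrite /= => h1 h2.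
move: h1 h2; case: (\rank M) => [|r]; lia.
Qed.

Lemma transcript_ext m (q : seq (bv m * bool) -> bv m) O1 O2 k :
  (forall y, y \in map fst (transcript q O1 k) -> O1 y = O2 y) ->
  transcript q O1 k = transcript q O2 k.
Proof.
elim: k => [//|k IH] H /=.
have E : transcript q O1 k = transcript q O2 k.
  apply: IH => y Hy; apply: H; rewrite /= map_rcons mem_rcons inE Hy orbT //.
rewrite -E H // map_rcons mem_rcons inE eqxx //.
Qed.

Lemma size_transcript m (q : seq (bv m * bool) -> bv m) O k :
  size (transcript q O k) = k.
Proof. by elim: k => //= k IH; rewrite size_rcons IH. Qed.

Theorem mainTheorem11 (m n : nat) (hm : (1 <= m)%N) (hmn : (m <= n)%N)
  (q : seq (bv m * bool) -> bv m) (k : nat) (hk : (k <= 2 ^ m - 2)%N) :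
  exists (f g : bv n -> bv m),
    [/\ fully_balanced f, fully_balanced g,
        dim_img f = m, dim_img g = m.-1 &
        transcript q (fun y => y \in Cset f) k =
        transcript q (fun y => y \in Cset g) k].
Proof.
pose B : 'M['F_2]_(n, m) := pid_mx m.
pose f := lin B.
pose T := transcript q (fun y => y \in Cset f) k.
pose S : {set bv m} := 0 |: [set y in map fst T].
have [y0 Hy0] : exists y0, y0 \notin S.
  apply/existsP; rewrite -negb_forall; apply/negP => /forallP H.
  have : (#|[set: bv m]| <= #|S|)%N by apply: subset_leq_card; apply/subsetP => y _; exact: H.
  rewrite cardsT card_mx card_Fp // mul1n.
  have h1 : (#|S| <= 1 + k)%N.
    rewrite cardsU1 cardsE; apply: leq_add; first exact: leq_b1.
    by have := card_size (map fst T); rewrite size_map size_transcript.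
  have : (1 < 2 ^ m)%N by rewrite -{1}(expn0 2) ltn_exp2l.
  lia.
move: Hy0; rewrite !inE negb_or => /andP [y0nz y0T].
have [j hj] : exists j, y0 0 j = 1.
  have /nz_col [j Hj] : y0^T != 0.
    by apply: contra y0nz => /eqP H; rewrite -[y0]trmxK H trmx0.
  by exists j; rewrite -Hj mxE.
pose g := lin (B *m Pm y0 j).
have Of y : (y \in Cset f) = (y == 0).
  rewrite Cset_lin B_inj //; apply/eqP/eqP => [H|->]; last by rewrite trmx0.
  by rewrite -[y]trmxK H trmx0.
have Og y : (y \in Cset g) = (y == 0) || (y == y0).
  by rewrite Cset_lin -mulmxA B_inj // Pm_ker.
exists f, g; split.
- exact: fb_lin.
- exact: fb_lin.
- by rewrite dim_lin rank_pid_mx.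
- by rewrite dim_lin rank_BM // rank_Pm.
clearbody f g; apply: transcript_ext => y Hy.
rewrite -/T in Hy.
have ny : (y == y0) = false.
  apply/negbTE; apply/eqP => E.
  by move: y0T; rewrite -E Hy.
by rewrite Of Og ny orbF.
Qed.
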